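(* Let $k\ge 3$, $n_1,\dots,n_k\ge 2$ and $r\in[k]$. The complete $k$-partite graph $K_{n_1,\dots,n_k}$ and the clique-star $CS^r_{n_1,\dots,n_k}$ (on the same vertex set) are not locally equivalent; that is, $\mathcal{O}(K_{n_1,\dots,n_k})\cap\mathcal{O}(CS^r_{n_1,\dots,n_k})=\emptyset$.
   Context: Both graphs are on vertex set $U_1\sqcup\cdots\sqcup U_k$ with $|U_i|=n_i$. $K_{n_1,\dots,n_k}$: edges exactly between different parts. $CS^r_{n_1,\dots,n_k}$: each $U_i$ is a clique, every vertex of $U_r$ is adjacent to every vertex of each $U_i$ with $i\ne r$, and no edges between $U_i,U_l$ for distinct $i,l\ne r$. The local complement $c_v(G)$ complements the edges among the neighbours of $v$; two graphs are locally equivalent if related by a finite sequence of local complements; $\mathcal{O}(G)$ is the set of graphs locally equivalent to $G$. *)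

(* Defs.v *)
From mathcomp Require Import all_boot.
Set Implicit Arguments. Unset Strict Implicit. Unset Printing Implicit Defensive.

Definition graph (V : finType) := rel V.

Definition local_compl (V : finType) (G : graph V) (v : V) : graph V :=
  fun x y => if [&& x != y, G v x & G v y] then ~~ G x y else G x y.

Definition lc_seq (V : finType) (G : graph V) (s : seq V) : graph V :=
  foldl (@local_compl V) G s.

Definition loc_equiv (V : finType) (G H : graph V) : Prop :=
  exists s : seq V, forall x y, lc_seq G s x y = H x y.

Definition orbit_lc (V : finType) (G : graph V) : graph V -> Prop := loc_equiv G.

(* vertex set U_1 ⊔ ... ⊔ U_k, with |U_i| = n_i ; a vertex is a pair (part i, index) *)
Definition kvert {k : nat} (n : 'I_k -> nat) : finType := {i : 'I_k & 'I_(n i)}.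

Definition complete_multipartite {k : nat} (n : 'I_k -> nat) : graph (kvert n) :=
  fun x y => tag x != tag y.

Definition clique_star {k : nat} (n : 'I_k -> nat) (r : 'I_k) : graph (kvert n) :=
  fun x y => if tag x == tag y then x != y else (tag x == r) || (tag y == r).

Arguments kvert {k} n.
Arguments complete_multipartite {k} n _ _.
Arguments clique_star {k} n r _ _.

(* Main.v *)
Require Import Defs.
From mathcomp Require Import all_boot all_algebra.
Set Implicit Arguments. Unset Strict Implicit. Unset Printing Implicit Defensive.
Import GRing.Theory.
Local Open Scope ring_scope.

Lemma F2nat (k : nat) : (k%:R : 'F_2) = (odd k)%:R.
Proof. by rewrite -Fp_nat_mod // modn2. Qed.
Lemma F2_11 : (1 + 1 : 'F_2) = 0. Proof. exact: (F2nat 2). Qed.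

Ltac f2 := rewrite /= ?mulr1n ?mulr0n ?mul0r ?mulr0 ?mul1r ?mulr1 ?add0r ?addr0 ?F2_11 ?add0r ?addr0 //.

Section Cut.
Variable T : finType.

Definition cutmx (G : rel T) (X : {set T}) : 'M['F_2]_#|T| :=
  \matrix_(i, j) ((enum_val i \in X) && (enum_val j \notin X) && G (enum_val i) (enum_val j))%:R.

Lemma cutmx_ext (G H : rel T) X : G =2 H -> cutmx G X = cutmx H X.
Proof. by move=> e; apply/matrixP=> i j; rewrite !mxE e. Qed.

Definition symg (G : rel T) := forall x y, G x y = G y x.
Definition irrg (G : rel T) := forall x, G x x = false.

Lemma lc_sym G v : symg G -> symg (local_compl G v).
Proof. by move=> s x y; rewrite /local_compl eq_sym (s x y) [G v x && _]andbC. Qed.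

Lemma lc_irr G v : irrg G -> irrg (local_compl G v).
Proof. by move=> i x; rewrite /local_compl eqxx /= i. Qed.

Lemma lc_invol G v : irrg G -> local_compl (local_compl G v) v =2 G.
Proof.
move=> i x y; rewrite /local_compl i /= !andbF.
by case: ifP => h; rewrite h ?negbK.
Qed.

Lemma lc_le G v X : symg G -> irrg G ->
  (\rank (cutmx (local_compl G v) X) <= \rank (cutmx G X))%N.
Proof.
move=> s ir; case vX: (v \in X).
- pose a := \col_i ((enum_val i \in X) && (enum_val i != v) && G v (enum_val i))%:R : 'cV['F_2]_#|T|.
  have -> : cutmx (local_compl G v) X = (1%:M + a *m delta_mx 0 (enum_rank v)) *m cutmx G X.
    rewrite mulmxDl mul1mx -mulmxA -rowE; apply/matrixP=> i j.
    rewrite !mxE big_ord1 !mxE enum_rankK vX /=.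
    set x := enum_val i; set y := enum_val j; rewrite /local_compl.
    case hx: (x \in X); case hy: (y \in X); f2.
    have xy : x != y by apply/eqP=> e; rewrite e hy in hx.
    rewrite xy /=; case: (eqVneq x v) => [->|xv]; first by rewrite ir /=; f2.
    by case: (G v x); case: (G v y); case: (G x y); f2.
  exact: mxrankM_maxr.
- pose b := \row_j ((enum_val j \notin X) && (enum_val j != v) && G v (enum_val j))%:R : 'rV['F_2]_#|T|.
  have -> : cutmx (local_compl G v) X = cutmx G X *m (1%:M + delta_mx (enum_rank v) 0 *m b).
    rewrite mulmxDr mulmx1 mulmxA -colE; apply/matrixP=> i j.
    rewrite !mxE big_ord1 !mxE enum_rankK vX /=.
    set x := enum_val i; set y := enum_val j; rewrite /local_compl (s x v).
    case hx: (x \in X); case hy: (y \in X); f2.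
    have xy : x != y by apply/eqP=> e; rewrite e hy in hx.
    rewrite xy /=; case: (eqVneq y v) => [->|yv]; first by rewrite ir /= andbF; f2.
    by case: (G v x); case: (G v y); case: (G x y); f2.
  exact: mxrankM_maxl.
Qed.

Lemma lc_rank G v X : symg G -> irrg G ->
  \rank (cutmx (local_compl G v) X) = \rank (cutmx G X).
Proof.
move=> s i; apply/eqP; rewrite eqn_leq lc_le //=.
rewrite -{1}(cutmx_ext X (lc_invol v i)).
by apply: lc_le; [apply: lc_sym | apply: lc_irr].
Qed.

Lemma lcseq_rank s G X : symg G -> irrg G ->
  \rank (cutmx (lc_seq G s) X) = \rank (cutmx G X).
Proof.
elim: s G => [//|v s IH] G sy ir /=.
rewrite /lc_seq /= -/(lc_seq _ _) IH ?lc_rank //.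
  exact: lc_sym.
exact: lc_irr.
Qed.

End Cut.

Lemma mxsub_rank m n m' n' (f : 'I_m' -> 'I_m) (g : 'I_n' -> 'I_n) (A : 'M['F_2]_(m, n)) :
  (\rank (mxsub f g A) <= \rank A)%N.
Proof.
have -> : mxsub f g A = rowsub f 1%:M *m (A *m colsub g 1%:M).
  by rewrite mulmx_colsub mulmx1 -mxsub_mul mul1mx.
apply: leq_trans (mxrankM_maxr _ _) _; exact: mxrankM_maxl.
Qed.

Section Red.
Variables (k : nat) (n : 'I_k -> nat) (hn : forall i, (2 <= n i)%N).

Definition v0 (p : 'I_k) : kvert n := Tagged (fun i => 'I_(n i)) (Ordinal (ltnW (hn p))).
Definition v1 (p : 'I_k) : kvert n := Tagged (fun i => 'I_(n i)) (Ordinal (hn p)).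
Definition X0 : {set kvert n} := [set x : kvert n | val (tagged x) == 0%N].

Lemma v0X p : v0 p \in X0. Proof. by rewrite inE. Qed.
Lemma v1X p : v1 p \notin X0. Proof. by rewrite inE. Qed.
Lemma v01 p q : v0 p != v1 q.
Proof. by apply/eqP=> /(congr1 (fun x : kvert n => val (tagged x))). Qed.

Lemma red (G : graph (kvert n)) :
  (forall x y, x \in X0 -> y \notin X0 -> G x y = G (v0 (tag x)) (v1 (tag y))) ->
  \rank (cutmx G X0) = \rank (\matrix_(p, q) (G (v0 p) (v1 q))%:R : 'M['F_2]_k).
Proof.
move=> hG; set N := \matrix_(p, q) _.
apply/eqP; rewrite eqn_leq; apply/andP; split.
- pose tg := fun i : 'I_#|kvert n| => tag (enum_val i).
  pose dX := \row_(i < #|kvert n|) ((enum_val i \in X0)%:R : 'F_2).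
  pose dY := \row_(i < #|kvert n|) ((enum_val i \notin X0)%:R : 'F_2).
  have -> : cutmx G X0 = diag_mx dX *m mxsub tg tg N *m diag_mx dY.
    rewrite mul_diag_mx mul_mx_diag; apply/matrixP=> i j; rewrite !mxE.
    case hx: (enum_val i \in X0); case hy: (enum_val j \in X0); f2.
    by rewrite /tg hG ?hy.
  apply: leq_trans (mxrankM_maxl _ _) _.
  apply: leq_trans (mxrankM_maxr _ _) _.
  exact: mxsub_rank.
- have -> : N = mxsub (fun p => enum_rank (v0 p)) (fun q => enum_rank (v1 q)) (cutmx G X0).
    by apply/matrixP=> p q; rewrite !mxE !enum_rankK v0X v1X.
  exact: mxsub_rank.
Qed.

End Red.

Section Fin.
Variable k : nat.

Lemma sum_deltal (p : 'I_k) (F : 'I_k -> 'F_2) : \sum_l (p == l)%:R * F l = F p.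
Proof.
rewrite (bigD1 p) //= eqxx mul1r big1 ?addr0 // => l lp.
by rewrite eq_sym (negbTE lp) mul0r.
Qed.

Lemma sum_deltar (p : 'I_k) (F : 'I_k -> 'F_2) : \sum_l F l * (l == p)%:R = F p.
Proof.
rewrite -[RHS](sum_deltal p F); apply: eq_bigr => l _; rewrite mulrC eq_sym //.
Qed.

Lemma sum_cst (c : 'F_2) : \sum_(l < k) c = c * (odd k)%:R.
Proof. by rewrite sumr_const card_ord -[c *+ k]mulr_natr F2nat. Qed.

Lemma ker_rank (A : 'M['F_2]_k) (v : 'cV['F_2]_k) : A *m v = 0 -> v != 0 -> \rank A != k.
Proof.
move=> Av vn; apply/negP => /eqP rk.
have U : A \in unitmx by rewrite -row_full_unit /row_full rk.
by move: vn; rewrite -(mulKmx U v) Av mulmx0 eqxx.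
Qed.

Lemma cst_neq0 : (0 < k)%N -> const_mx 1 != 0 :> 'cV['F_2]_k.
Proof.
move=> k0; apply/eqP => /matrixP /(_ (Ordinal k0) 0); rewrite !mxE => /eqP.
by rewrite oner_eq0.
Qed.

Variable r : 'I_k.
Definition NK : 'M['F_2]_k := \matrix_(p, q) (1 + (p == q)%:R).
Definition NC : 'M['F_2]_k := \matrix_(p, q) ((p == q)%:R + (p == r)%:R + (q == r)%:R).

Lemma NC_rowsum p : \sum_l NC p l = (p == r)%:R * (odd k)%:R.
Proof.
under eq_bigr do rewrite mxE.
rewrite !big_split /= sum_cst.
have -> : \sum_(i < k) ((p == i)%:R : 'F_2) = 1.
  by rewrite -[RHS](sum_deltal p (fun _ => 1)); apply: eq_bigr => i _; rewrite mulr1.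
have -> : \sum_(i < k) ((i == r)%:R : 'F_2) = 1.
  by rewrite -[RHS](sum_deltar r (fun _ => 1)); apply: eq_bigr => i _; rewrite mul1r.
by rewrite addrC addrA F2_11 add0r.
Qed.

Lemma rank_diff : (0 < k)%N -> \rank NK != \rank NC.
Proof.
move=> k0; case ok: (odd k).
- have h1 : NK *m (const_mx 1 : 'cV['F_2]_k) = 0.
    apply/matrixP=> p q; rewrite !mxE.
    under eq_bigr do rewrite !mxE mulr1.
    rewrite big_split /= sum_cst ok.
    have -> : \sum_(i < k) ((p == i)%:R : 'F_2) = 1.
      by rewrite -[RHS](sum_deltal p (fun _ => 1)); apply: eq_bigr => i _; rewrite mulr1.
    by rewrite mulr1 F2_11.
  pose Q : 'M['F_2]_k := \matrix_(l, q) (1 + (l == q)%:R * (q != r)%:R).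
  have h2 : NC *m Q = 1%:M.
    apply/matrixP=> p q; rewrite !mxE.
    under eq_bigr do rewrite [Q _ _]mxE mulrDr mulr1 mulrA.
    rewrite big_split /= NC_rowsum -big_distrl /= sum_deltar ok mulr1 !mxE.
    have [qr|qr] := eqVneq q r; have [pr|pr] := eqVneq p r.
    all: rewrite ?qr ?pr ?(negbTE pr) ?eqxx; try by case: (p == q); f2.
    by rewrite eq_sym (negbTE qr); f2.
  have [U _] := mulmx1_unit h2.
  rewrite (mxrank_unit U).
  exact: ker_rank h1 (cst_neq0 k0).
- have h1 : NC *m (const_mx 1 : 'cV['F_2]_k) = 0.
    apply/matrixP=> p q; rewrite !mxE.
    under eq_bigr do rewrite [const_mx 1 _ _]mxE mulr1.
    by rewrite NC_rowsum ok mulr0.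
  have h2 : NK *m NK = 1%:M.
    apply/matrixP=> p q; rewrite !mxE.
    under eq_bigr do rewrite !mxE mulrDr mulr1 mulrDl mul1r.
    rewrite !big_split /= sum_cst ok mulr0 add0r sum_deltal.
    have -> : \sum_(i < k) ((p == i)%:R : 'F_2) = 1.
      by rewrite -[RHS](sum_deltal p (fun _ => 1)); apply: eq_bigr => i _; rewrite mulr1.
    have -> : \sum_(i < k) ((i == q)%:R : 'F_2) = 1.
      by rewrite -[RHS](sum_deltar q (fun _ => 1)); apply: eq_bigr => i _; rewrite mul1r.
    by rewrite addrA F2_11 add0r.
  have [U _] := mulmx1_unit h2.
  rewrite (mxrank_unit U) eq_sym.
  exact: ker_rank h1 (cst_neq0 k0).
Qed.

End Fin.

Local Close Scope ring_scope.
Theorem theorem10 (k : nat) (n : 'I_k -> nat) (r : 'I_k) :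
  3 <= k -> (forall i, 2 <= n i) ->
  ~ (exists H : graph (@kvert k n),
       orbit_lc (complete_multipartite n) H /\ orbit_lc (clique_star n r) H).
Proof.
move=> k3 hn [H [[s Hs] [t Ht]]].
have symK : symg (complete_multipartite n).
  by move=> x y; rewrite /complete_multipartite eq_sym.
have irrK : irrg (complete_multipartite n).
  by move=> x; rewrite /complete_multipartite eqxx.
have symC : symg (clique_star n r).
  by move=> x y; rewrite /clique_star eq_sym [y == x]eq_sym orbC.
have irrC : irrg (clique_star n r).
  by move=> x; rewrite /clique_star !eqxx.
have e1 := lcseq_rank s (X0 n) symK irrK.
have e2 := lcseq_rank t (X0 n) symC irrC.
rewrite (cutmx_ext _ Hs) in e1.
rewrite (cutmx_ext _ Ht) in e2.
have rK : \rank (cutmx (complete_multipartite n) (X0 n)) = \rank (NK k).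
  rewrite (@red k n hn) //; congr (\rank _); apply/matrixP=> p q; rewrite !mxE /=.
  by rewrite /complete_multipartite /=; case: (p == q); f2.
have rC : \rank (cutmx (clique_star n r) (X0 n)) = \rank (NC r).
  rewrite (@red k n hn).
    congr (\rank _); apply/matrixP=> p q; rewrite !mxE /clique_star /=.
    have [pq|pq] := eqVneq p q.
      rewrite v01 pq -addrA.
      by case: (q == r); f2.
    by case: (eqVneq p r) => [pr|pr]; case: (eqVneq q r) => [qr|qr]; f2;
      move: pq; rewrite pr qr eqxx.
  move=> x y hx hy; rewrite /clique_star /= v01.
  case: ifP => // _; apply/eqP=> exy; by rewrite exy (negbTE hy) in hx.
have := rank_diff r (leq_trans (isT : (0 < 3)%N) k3).
by rewrite -rK -rC -e1 -e2 eqxx.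
Qed.
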